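(* For any RES-graph $(G,\gamma,b)$, any shifting $\gamma'$ of $\gamma$, and any set of vertices $X$ with $b\in X$, $$\tilde{\nu}(G,\gamma,b)\le \gamma'(E(X))+\tfrac12|\delta(X)|-\mathrm{odd}_{\gamma'}(G-X).$$
   Context: Graphs are finite and may have loops and multiple edges. Each edge consists of two half-edges; each half-edge is incident to a vertex, and a loop has both half-edges at the same vertex, so it contributes $2$ to that vertex's degree. An arc is an ordered pair $(h_1,h_2)$ of half-edges forming an edge; its tail is the vertex of $h_1$ and its head is the vertex of $h_2$. A trail is a sequence of arcs whose edges are pairwise distinct and such that the head of each arc (other than the last) is the tail of the next. A circuit is a trail whose head equals its tail. A circuit hits a vertex $v$ if it contains an arc incident to $v$. A circuit-decomposition of $G$ is a collection of circuits such that every edge of $G$ is used by exactly one circuit of the collection. A graph is Eulerian if it is connected and every vertex has even degree. A signature of $G$ is a function $\gamma:E(G)\to\mathbb{Z}_2$. The weight of a trail is the sum in $\mathbb{Z}_2$ of $\gamma$ over its edges, and a trail (or edge) is zero or non-zero according to its weight. Shifting at a vertex $v$ means adding $1$ to the weight of every non-loop edge incident to $v$. A shifting of $\gamma$ is any signature obtainable from $\gamma$ by a sequence of shiftings at vertices. An RES-graph is a triple $(G,\gamma,b)$ where $G$ is an Eulerian graph, $\gamma$ is a signature of $G$, and $b\in V(G)$. The flooding number $\tilde{\nu}(G,\gamma,b)$ is the maximum size of a circuit-decomposition of $G$ in which every circuit is non-zero and hits $b$; it is $0$ if no such decomposition exists. For $X\subseteq V(G)$, $E(X)$ is the set of edges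 with both ends in $X$, and $\delta(X)$ is the set of edges with exactly one end in $X$. For an edge set $F$, $\gamma'(F)$ denotes the number of edges of $F$ with weight $1$ under $\gamma'$. A vertex set $Y$ is $\gamma'$-odd if the parity of $\gamma'(E(Y)\cup\delta(Y))$ differs from the parity of $|\delta(Y)|/2$. Finally, $\mathrm{odd}_{\gamma'}(G-X)$ is the number of components of $G-X$ whose vertex set is $\gamma'$-odd. *)

(* Defs.v *)
From mathcomp Require Import all_boot all_algebra.
From Stdlib Require Import ClassicalEpsilon.
Set Implicit Arguments. Unset Strict Implicit. Unset Printing Implicit Defensive.
Import GRing.Theory.

(* A finite multigraph (loops and parallel edges allowed): vertex type V,
   edge type E, and [ends e = (u, v)] the vertices of the two half-edges of
   e.  Half-edge (e, false) sits at (ends e).1, half-edge (e, true) at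
   (ends e).2.  A loop is an edge with (ends e).1 = (ends e).2. *)

Section Graphs.
Variables (V E : finType) (ends : E -> V * V).

Definition is_loop (e : E) : bool := (ends e).1 == (ends e).2.

Definition deg (v : V) : nat :=
  \sum_(e : E) (((ends e).1 == v) + ((ends e).2 == v)).

Definition adj (u v : V) : bool :=
  [exists e : E, (ends e == (u, v)) || (ends e == (v, u))].

Definition connected_graph : Prop := forall u v : V, connect adj u v.

Definition eulerian : Prop := connected_graph /\ forall v : V, ~~ odd (deg v).

(* An arc is an ordered pair of the two half-edges of an edge; it is encoded
   as (e, d): d = false means (h1,h2) = ((e,false),(e,true)),
   d = true means (h1,h2) = ((e,true),(e,false)). *)
Definition arc := (E * bool)%type.
Definition tail (a : arc) : V := if a.2 then (ends a.1).2 else (ends a.1).1.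
Definition head (a : arc) : V := if a.2 then (ends a.1).1 else (ends a.1).2.

Definition trail (t : seq arc) : bool :=
  uniq (map fst t) &&
  (if t is a :: t' then path (fun x y => head x == tail y) a t' else true).

Definition circuit (t : seq arc) : bool :=
  trail t &&
  (if t is a :: t' then head (last a t') == tail a else false).

Definition hits (v : V) (t : seq arc) : bool :=
  has (fun a => (tail a == v) || (head a == v)) t.

Definition signature := E -> 'Z_2.

Definition weight (g : signature) (t : seq arc) : 'Z_2 :=
  (\sum_(a <- t) g a.1)%R.

Definition shift_at (v : V) (g : signature) : signature :=
  fun e => if ~~ is_loop e && (((ends e).1 == v) || ((ends e).2 == v))
           then (g e + 1)%R else g e.

Definition is_shifting (g g' : signature) : Prop :=
  exists s : seq V, g' =1 foldl (fun h v => shift_at v h) g s.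

Definition flooding_decomp (g : signature) (b : V) (D : seq (seq arc)) : Prop :=
  (forall c, c \in D -> [/\ circuit c, weight g c != 0%R & hits b c]) /\
  (forall e : E, count (fun c => e \in map fst c) D = 1%N).

Definition pbool (P : Prop) : bool :=
  if excluded_middle_informative P then true else false.

(* flooding number: maximum size of such a decomposition, 0 if none.
   Every such decomposition has at most #|E| circuits (circuits are nonempty
   and edge-disjoint), so the maximum is taken over k <= #|E|. *)
Definition flooding_number (g : signature) (b : V) : nat :=
  \max_(k < #|E|.+1 | pbool (exists D, flooding_decomp g b D /\ size D = k)) k.

Definition Ein (X : {set V}) : {set E} :=
  [set e | ((ends e).1 \in X) && ((ends e).2 \in X)].
Definition delta (X : {set V}) : {set E} :=
  [set e | ((ends e).1 \in X) != ((ends e).2 \in X)].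

Definition gcount (g : signature) (F : {set E}) : nat :=
  #|[set e in F | g e == 1%R]|.

Definition odd_set (g : signature) (Y : {set V}) : bool :=
  odd (gcount g (Ein Y :|: delta Y)) != odd (#|delta Y| ./2).

Definition adj_minus (X : {set V}) (u v : V) : bool :=
  (u \notin X) && (v \notin X) && adj u v.

Definition component_minus (X : {set V}) (Y : {set V}) : bool :=
  [exists u : V, (u \notin X) && (Y == [set v | connect (adj_minus X) u v])].

Definition odd_comp (g : signature) (X : {set V}) : nat :=
  #|[set Y : {set V} | component_minus X Y && odd_set g Y]|.

End Graphs.

(* Main.v *)
Require Import Defs.
From mathcomp Require Import all_boot all_algebra zify.
From Stdlib Require Import ClassicalEpsilon.
Set Implicit Arguments. Unset Strict Implicit. Unset Printing Implicit Defensive.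


Section S1.
Variables (V E : finType) (ends : E -> V * V).
Local Notation tl := (@Defs.tail V E ends).
Local Notation hd := (@Defs.head V E ends).

Lemma countE (T : Type) (p : pred T) (s : seq T) : count p s = \sum_(x <- s) (p x : nat).
Proof. by elim: s => [|x s IH]; rewrite ?big_nil ?big_cons //= IH. Qed.

Lemma path_sum (f : V -> nat) a t :
  path (fun x y => hd x == tl y) a t ->
  \sum_(x <- a :: t) f (tl x) + f (hd (last a t)) = f (tl a) + \sum_(x <- a :: t) f (hd x).
Proof.
elim: t a => [|b t IH] a /=; first by rewrite !big_cons !big_nil !addn0 addnC.
case/andP => /eqP hab pt.
rewrite big_cons -addnA IH. rewrite !big_cons -hab.
  by []. by [].
Qed.

Lemma circuit_sum (f : V -> nat) c : circuit ends c ->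
  \sum_(x <- c) f (tl x) = \sum_(x <- c) f (hd x).
Proof.
case: c => [|a t] //= /andP[/andP[_ pt] /eqP hl].
by have := path_sum f pt; rewrite hl addnC => /addnI.
Qed.

Lemma th_sum (f : V -> nat) c :
  \sum_(x <- c) (f (tl x) + f (hd x)) = \sum_(x <- c) (f (ends x.1).1 + f (ends x.1).2).
Proof. by apply: eq_bigr => [[e []]] _ //=; rewrite /tail /head /= addnC. Qed.

Lemma circuit_even (f : V -> nat) c : circuit ends c ->
  ~~ odd (\sum_(x <- c) (f (ends x.1).1 + f (ends x.1).2)).
Proof.
move=> cc; rewrite -th_sum big_split /= circuit_sum // addnn odd_double //.
Qed.

End S1.

Module Z2.
Import GRing.Theory.

Lemma z2E (x : 'Z_2) : x = (((x == 1%R) : nat)%:R)%R.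
Proof. by case: x => [[|[|i]] Hi] //; apply/val_inj. Qed.
Lemma z2nat n : ((((n%:R)%R : 'Z_2) == 0%R) = ~~ odd n).
Proof. rewrite Zp_nat; apply/eqP/idP. move/(congr1 val) => /=. rewrite modn2. by case: (odd n).
move=> H; apply/val_inj => /=. by rewrite modn2 (negbTE H). Qed.

Section S2.
Variables (V E : finType) (ends : E -> V * V).

Lemma weightE (h : signature E) c : weight h c = ((count (fun x => h x.1 == 1%R) c)%:R)%R.
Proof. rewrite /weight countE natr_sum; apply: eq_bigr => x _; exact: z2E. Qed.

Lemma shift_weight v h c : circuit ends c -> weight (shift_at ends v h) c = weight h c.
Proof.
move=> cc.
pose inc (x : Defs.arc E) := ~~ is_loop ends x.1 && (((ends x.1).1 == v) || ((ends x.1).2 == v)).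
pose lv (x : Defs.arc E) := is_loop ends x.1 && ((ends x.1).1 == v).
have e1 : weight (shift_at ends v h) c = (weight h c + (count inc c)%:R)%R.
  rewrite /weight countE natr_sum -big_split; apply: eq_bigr => x _.
  rewrite /shift_at /inc; case: ifP => _ /=; by rewrite ?mulr1n ?mulr0n ?addr0.
have e2 : \sum_(x <- c) (((ends x.1).1 == v) + ((ends x.1).2 == v)) = count inc c + (count lv c + count lv c).
  rewrite !countE -!big_split; apply: eq_bigr => x _ /=.
  rewrite /inc /lv /is_loop; move: (ends x.1) => [u1 u2] /=.
  case: (u1 =P v) => [?|n1]; case: (u2 =P v) => [?|n2]; case: (u1 =P u2) => [?|n3]; subst => //=;
    rewrite ?eqxx //= ?(introF eqP n1) ?(introF eqP n2) ?(introF eqP n3) //=.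

have := circuit_even (fun u => (u == v) : nat) cc; rewrite /= e2 addnn oddD odd_double addbF => ev.
by move: ev; rewrite -z2nat => /eqP ev; rewrite e1 ev addr0.
Qed.

Lemma shifting_weight g g' c : is_shifting ends g g' -> circuit ends c -> weight g' c = weight g c.
Proof.
move=> [s Hs] cc.
have -> : weight g' c = weight (foldl (fun h v => shift_at ends v h) g s) c.
  by rewrite /weight; apply: eq_bigr => x _; rewrite Hs.
elim: s g {Hs} => [|v s IH] g //=.
by rewrite IH shift_weight.
Qed.

End S2.

End Z2.
Import Z2.


Section S3.
Variables (V E : finType) (ends : E -> V * V).
Local Notation tl := (@Defs.tail V E ends).
Local Notation hd := (@Defs.head V E ends).

Lemma edge_sum (D : seq (seq (Defs.arc E))) (p : pred E) :
 (forall c, c \in D -> uniq (map fst c)) -> (forall e, count (fun c => e \in map fst c) D = 1%N) ->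
 \sum_(c <- D) count (fun x => p x.1) c = #|[set e | p e]|.
Proof.
move=> U C.
transitivity (\sum_(c <- D) \sum_e ((e \in map fst c) * p e)).
  rewrite big_seq_cond [RHS]big_seq_cond; apply: eq_bigr => c /andP[cD _].
  have -> : count (fun x => p x.1) c = count p (map fst c) by rewrite count_map.
  rewrite countE big_uniq ?U // big_mkcond /=; apply: eq_bigr => e _.
  by case: (e \in _); case: (p e).
rewrite exchange_big /=.
transitivity (\sum_e (p e : nat)).
  by apply: eq_bigr => e _; rewrite -big_distrl /= -countE C mul1n.
rewrite cardsE -sum1_card [RHS]big_mkcond; apply: eq_bigr => e _; rewrite unfold_in; by case: (p e).
Qed.

Definition FY (Y : {set V}) := Ein ends Y :|: delta ends Y.

Lemma inFY Y e : (e \in FY Y) = ((ends e).1 \in Y) || ((ends e).2 \in Y).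
Proof. by rewrite !inE; case: ((ends e).1 \in Y); case: ((ends e).2 \in Y). Qed.

Lemma in_delta_arc Y (x : Defs.arc E) : (x.1 \in delta ends Y) = ((tl x \in Y) != (hd x \in Y)).
Proof. by case: x => e [] /=; rewrite inE /Defs.tail /Defs.head //= eq_sym. Qed.

Lemma inFY_arc Y (x : Defs.arc E) : (x.1 \in FY Y) = ((tl x \in Y) || (hd x \in Y)).
Proof. by case: x => e [] /=; rewrite inFY /Defs.tail /Defs.head //= orbC. Qed.

Lemma path_const (Y : {set V}) a t : path (fun x y => hd x == tl y) a t ->
  all (fun x => (tl x \in Y) == (hd x \in Y)) (a :: t) ->
  all (fun x => ((tl x \in Y) == (tl a \in Y)) && ((hd x \in Y) == (tl a \in Y))) (a :: t).
Proof.
elim: t a => [|b t IH] a /=.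
  by rewrite eqxx /= eq_sym !andbT.
case/andP => /eqP hab pt /and3P[/eqP e1 /eqP e2 al].
have tb : (tl b \in Y) = (tl a \in Y) by rewrite -hab e1.
have H := IH b pt; have {}H : _ := H ltac:(by rewrite /= e2 eqxx al); rewrite tb in H.
by rewrite eqxx -e1 eqxx /=.
Qed.

Definition dY Y (c : seq (Defs.arc E)) := count (fun x => x.1 \in delta ends Y) c.

Lemma dY_even Y c : circuit ends c -> ~~ odd (dY Y c).
Proof.
move=> cc; have := circuit_even (fun u => (u \in Y) : nat) cc.
have -> : \sum_(x <- c) (((ends x.1).1 \in Y) + ((ends x.1).2 \in Y))
   = dY Y c + (count (fun x => x.1 \in Ein ends Y) c + count (fun x => x.1 \in Ein ends Y) c).
  rewrite /dY !countE -!big_split; apply: eq_bigr => x _ /=; rewrite !inE.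
  by case: ((ends x.1).1 \in Y); case: ((ends x.1).2 \in Y).
by rewrite addnn oddD odd_double addbF.
Qed.

Lemma hit_zero (Y : {set V}) b c : circuit ends c -> hits ends b c -> b \notin Y -> dY Y c = 0 ->
  count (fun x => x.1 \in FY Y) c = 0.
Proof.
case: c => [|a t] // /andP[/andP[_ pt] _] hb bY.
rewrite /dY => Hd.
have /hasPn H0 : ~~ has (fun x => x.1 \in delta ends Y) (a :: t).
  by rewrite has_count -eqn0Ngt; apply/eqP.
have al : all (fun x => (tl x \in Y) == (hd x \in Y)) (a :: t).
  by apply/allP => x /H0; rewrite in_delta_arc negbK.
have := path_const pt al => /allP C.
have ta : (tl a \in Y) = false.
  case/hasP: hb => x xin /orP[] /eqP hx; have /andP[/eqP h1 /eqP h2] := C x xin.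
    by rewrite -h1 hx; apply/negbTE.
  by rewrite -h2 hx; apply/negbTE.
apply/eqP; rewrite eqn0Ngt -has_count; apply/hasPn => x xin.
rewrite inFY_arc; have /andP[/eqP -> /eqP ->] := C x xin; by rewrite ta.
Qed.

End S3.


Lemma sum_single (T : finType) (CsX : {set T}) y (F : T -> nat) :
  y \in CsX -> (forall Y, Y \in CsX -> Y != y -> F Y = 0) -> \sum_(Y in CsX) F Y = F y.
Proof.
move=> yC H; rewrite (bigD1 y) //= big1 ?addn0 // => Y /andP[YC ne]; exact: H.
Qed.

Lemma card_sumE (T : finType) (A : {set T}) : #|A| = \sum_x (x \in A : nat).
Proof. by rewrite -sum1_card [LHS]big_mkcond. Qed.

Lemma sum_eq_in (T : finType) (x : T) (Y : {set T}) : \sum_(v in Y) (x == v : nat) = (x \in Y).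
Proof.
case: (boolP (x \in Y)) => xY.
  rewrite (bigD1 x) //= eqxx big1 ?addn0 // => v /andP[_ ne]; by rewrite eq_sym (negbTE ne).
rewrite big1 // => v vY; case: eqP => // xv; by rewrite xv vY in xY.
Qed.

Section S4.
Variables (V E : finType) (ends : E -> V * V) (X : {set V}).

Lemma adj_sym : symmetric (adj ends).
Proof. move=> u v; apply/existsP/existsP => [][e H]; exists e; by rewrite orbC. Qed.

Lemma adjm_sym : symmetric (adj_minus ends X).
Proof. move=> u v; rewrite /adj_minus adj_sym; by case: (u \in X); case: (v \in X). Qed.

Let Rsym := sym_connect_sym adjm_sym.
Definition RX := connect (adj_minus ends X).
Definition compX u := [set v | RX u v].
Definition CsX := [set Y | component_minus ends X Y].

Lemma R_notX u v : RX u v -> u \notin X -> v \notin X.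
Proof.
move=> Ruv; have cl : closed (adj_minus ends X) [predC X].
  by move=> x y /andP[/andP[hx hy] _]; rewrite !inE hx hy.
by have := closed_connect cl Ruv; rewrite !inE => ->.
Qed.

Lemma inCs Y : Y \in CsX -> exists2 u, u \notin X & Y = compX u.
Proof. by rewrite inE => /existsP[u /andP[hu /eqP ->]]; exists u. Qed.

Lemma Cs_notX Y v : Y \in CsX -> v \in Y -> v \notin X.
Proof. by case/inCs => u hu -> ; rewrite inE => /R_notX; apply. Qed.

Lemma Cs_comp Y v : Y \in CsX -> v \in Y -> Y = compX v.
Proof.
case/inCs => u hu ->; rewrite inE => Ruv.
by apply/setP => w; rewrite !inE /RX (same_connect Rsym Ruv).
Qed.

Lemma comp_in v : v \notin X -> compX v \in CsX.
Proof. by move=> hv; rewrite inE; apply/existsP; exists v; rewrite hv eqxx. Qed.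

Lemma comp_self v : v \in compX v.
Proof. by rewrite inE /RX connect0. Qed.

Lemma ends_comp e : (ends e).1 \notin X -> (ends e).2 \notin X -> compX (ends e).1 = compX (ends e).2.
Proof.
move=> h1 h2; have R12 : RX (ends e).1 (ends e).2.
  apply: connect1; rewrite /adj_minus h1 h2 /=; apply/existsP; exists e.
  by rewrite -surjective_pairing eqxx.
by apply/setP => w; rewrite !inE /RX (same_connect Rsym R12).
Qed.

Lemma key e x Y : (x = (ends e).1 \/ x = (ends e).2) -> x \notin X -> Y \in CsX -> e \in FY ends Y -> Y = compX x.
Proof.
move=> hx xX YC; rewrite inFY => /orP[] zY; rewrite (Cs_comp YC zY);
  have zX := Cs_notX YC zY; case: hx => hx; subst x => //.
  exact: ends_comp.
by apply: esym; apply: ends_comp.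
Qed.

Lemma key0 e Y : (ends e).1 \in X -> (ends e).2 \in X -> Y \in CsX -> e \notin FY ends Y.
Proof.
move=> h1 h2 YC; rewrite inFY; apply/negP => /orP[] zY.
  by move: (Cs_notX YC zY); rewrite h1.
by move: (Cs_notX YC zY); rewrite h2.
Qed.

End S4.


Section S5.
Variables (V E : finType) (ends : E -> V * V) (X : {set V}).
Local Notation Cs := (CsX ends X).
Local Notation comp := (compX ends X).

Lemma P_FY e : \sum_(Y in Cs) (e \in FY ends Y : nat) = (e \notin Ein ends X).
Proof.
case h1: ((ends e).1 \in X); case h2: ((ends e).2 \in X).
- rewrite big1; first by rewrite inE h1 h2.
  by move=> Y YC; rewrite (negbTE (key0 h1 h2 YC)).
- have hx : (ends e).2 = (ends e).1 \/ (ends e).2 = (ends e).2 by right.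
  rewrite (sum_single (y := comp (ends e).2)); first 1 last.
  + by apply: comp_in; rewrite h2.
  + move=> Y YC ne; case: (boolP (e \in FY ends Y)) => // eF.
    by rewrite (key hx _ YC eF) ?h2 ?eqxx in ne.
  by rewrite inFY comp_self orbT inE h1 h2.
- have hx : (ends e).1 = (ends e).1 \/ (ends e).1 = (ends e).2 by left.
  rewrite (sum_single (y := comp (ends e).1)); first 1 last.
  + by apply: comp_in; rewrite h1.
  + move=> Y YC ne; case: (boolP (e \in FY ends Y)) => // eF.
    by rewrite (key hx _ YC eF) ?h1 ?eqxx in ne.
  by rewrite inFY comp_self /= !inE h1 h2.
- have hx : (ends e).1 = (ends e).1 \/ (ends e).1 = (ends e).2 by left.
  rewrite (sum_single (y := comp (ends e).1)); first 1 last.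
  + by apply: comp_in; rewrite h1.
  + move=> Y YC ne; case: (boolP (e \in FY ends Y)) => // eF.
    by rewrite (key hx _ YC eF) ?h1 ?eqxx in ne.
  by rewrite inFY comp_self /= !inE h1 h2.
Qed.

Lemma P_delta e : \sum_(Y in Cs) (e \in delta ends Y : nat) = (e \in delta ends X).
Proof.
have dF Y : e \in delta ends Y -> e \in FY ends Y by rewrite inFY inE; case: ((ends e).1 \in Y); case: ((ends e).2 \in Y).
case h1: ((ends e).1 \in X); case h2: ((ends e).2 \in X).
- rewrite big1; first by rewrite inE h1 h2.
  move=> Y YC; case: (boolP (e \in delta ends Y)) => // /dF eF.
  by move: (key0 h1 h2 YC); rewrite eF.
- have hx : (ends e).2 = (ends e).1 \/ (ends e).2 = (ends e).2 by right.
  rewrite (sum_single (y := comp (ends e).2)); first 1 last.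
  + by apply: comp_in; rewrite h2.
  + move=> Y YC ne; case: (boolP (e \in delta ends Y)) => // /dF eF.
    by rewrite (key hx _ YC eF) ?h2 ?eqxx in ne.
  have n1 : (ends e).1 \notin comp (ends e).2.
    have c2 : comp (ends e).2 \in Cs by apply: comp_in; rewrite h2.
    by apply/negP => /(Cs_notX c2); rewrite h1.
  by rewrite [e \in delta ends (comp _)]inE comp_self (negbTE n1) [e \in delta ends X]inE h1 h2.
- have hx : (ends e).1 = (ends e).1 \/ (ends e).1 = (ends e).2 by left.
  rewrite (sum_single (y := comp (ends e).1)); first 1 last.
  + by apply: comp_in; rewrite h1.
  + move=> Y YC ne; case: (boolP (e \in delta ends Y)) => // /dF eF.
    by rewrite (key hx _ YC eF) ?h1 ?eqxx in ne.
  have n2 : (ends e).2 \notin comp (ends e).1.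
    have c1 : comp (ends e).1 \in Cs by apply: comp_in; rewrite h1.
    by apply/negP => /(Cs_notX c1); rewrite h2.
  by rewrite [e \in delta ends (comp _)]inE comp_self (negbTE n2) [e \in delta ends X]inE h1 h2.
- have hx : (ends e).1 = (ends e).1 \/ (ends e).1 = (ends e).2 by left.
  rewrite (sum_single (y := comp (ends e).1)); first 1 last.
  + by apply: comp_in; rewrite h1.
  + move=> Y YC ne; case: (boolP (e \in delta ends Y)) => // /dF eF.
    by rewrite (key hx _ YC eF) ?h1 ?eqxx in ne.
  rewrite (ends_comp (e := e)) ?h1 ?h2 //.
  by rewrite [e \in delta ends (comp _)]inE -{1}(ends_comp (e := e)) ?h1 ?h2 // !comp_self [e \in delta ends X]inE h1 h2.
Qed.

Lemma sum_delta : \sum_(Y in Cs) #|delta ends Y| = #|delta ends X|.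
Proof.
rewrite (card_sumE (delta ends X)); under eq_bigr => Y _ do rewrite (card_sumE (delta ends Y)).
rewrite exchange_big /=; apply: eq_bigr => e _; exact: P_delta.
Qed.

Lemma count_part (q : pred E) (c : seq (Defs.arc E)) :
  count (fun x => q x.1) c = count (fun x => (x.1 \in Ein ends X) && q x.1) c
    + \sum_(Y in Cs) count (fun x => (x.1 \in FY ends Y) && q x.1) c.
Proof.
rewrite !countE; under [X in _ + X]eq_bigr do rewrite countE.
rewrite [X in _ + X]exchange_big /= -big_split; apply: eq_bigr => x _ /=.
case: (q x.1) => /=.
  under eq_bigr do rewrite andbT.
  by rewrite P_FY !andbT; case: (x.1 \in Ein ends X).
by rewrite big1 ?andbF // => Y _; rewrite andbF.
Qed.

Lemma delta_even (Y : {set V}) : eulerian ends -> ~~ odd #|delta ends Y|.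
Proof.
case=> _ ev.
have H : \sum_(v in Y) deg ends v = #|delta ends Y| + (#|Ein ends Y| + #|Ein ends Y|).
  rewrite /deg exchange_big /= !card_sumE -!big_split /=; apply: eq_bigr => e _.
  rewrite big_split /= !sum_eq_in !inE.
  by case: ((ends e).1 \in Y); case: ((ends e).2 \in Y).
have : ~~ odd (\sum_(v in Y) deg ends v).
  by apply: (big_ind (fun n => ~~ odd n)) => // x y hx hy; rewrite oddD (negbTE hx) (negbTE hy).
by rewrite H oddD addnn odd_double addbF.
Qed.

Lemma delta_pos Y b : connected_graph ends -> b \in X -> Y \in Cs -> 0 < #|delta ends Y|.
Proof.
move=> cg bX YC; case/inCs: (YC) => u hu defY.
have uY : u \in Y by rewrite defY comp_self.
have bY : b \notin Y by apply/negP => /(Cs_notX YC); rewrite bX.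
rewrite lt0n; apply/negP => /eqP /cards0_eq d0.
have cl : closed (adj ends) Y.
  move=> x y /existsP[e /orP[] /eqP he].
    have : e \notin delta ends Y by rewrite d0 inE.
    by rewrite inE he /= negbK => /eqP.
  have : e \notin delta ends Y by rewrite d0 inE.
  by rewrite inE he /= negbK => /eqP.
by have := closed_connect cl (cg u b); rewrite uY (negbTE bY).
Qed.

End S5.


Lemma odd_sum_eq (I : Type) (r : seq I) (P : pred I) (F G : I -> nat) :
  (forall i, P i -> odd (F i) = odd (G i)) ->
  odd (\sum_(i <- r | P i) F i) = odd (\sum_(i <- r | P i) G i).
Proof.
move=> H; apply: (big_ind2 (fun a b => odd a = odd b)) => //.
by move=> x1 x2 y1 y2 h1 h2; rewrite !oddD h1 h2.
Qed.

Lemma half_sum (I : Type) (r : seq I) (P : pred I) (F : I -> nat) :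
  (forall i, P i -> ~~ odd (F i)) ->
  (\sum_(i <- r | P i) F i)./2 = \sum_(i <- r | P i) (F i)./2.
Proof.
move=> H.
have -> : \sum_(i <- r | P i) F i = \sum_(i <- r | P i) ((F i)./2 + (F i)./2).
  apply: eq_bigr => i Pi. by rewrite addnn -[LHS]odd_double_half (negbTE (H i Pi)).
by rewrite big_split /= addnn doubleK.
Qed.

Lemma sum_lt (I : eqType) (r : seq I) (F G : I -> nat) c0 :
  (forall c, c \in r -> F c <= G c) -> c0 \in r -> F c0 < G c0 ->
  \sum_(c <- r) F c < \sum_(c <- r) G c.
Proof.
elim: r => [|x r IH] // H; rewrite inE => /orP[/eqP ->|cr] lt; rewrite !big_cons.
  have : \sum_(c <- r) F c <= \sum_(c <- r) G c.
    by rewrite big_seq [X in _ <= X]big_seq; apply: leq_sum => c cr; apply: H; rewrite inE cr orbT.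
  lia.
have := IH (fun c cr => H c (mem_behead (s := x :: r) cr)) cr lt.
have := H x (mem_head _ _); lia.
Qed.


Section Main.
Variables (V E : finType) (ends : E -> V * V) (g g' : signature E) (b : V) (X : {set V}).
Hypotheses (eul : eulerian ends) (sh : is_shifting ends g g') (bX : b \in X).
Local Notation Cs := (CsX ends X).

Definition Aw (c : seq (Defs.arc E)) := count (fun x => (x.1 \in Ein ends X) && (g' x.1 == 1%R)) c.
Definition ww Y (c : seq (Defs.arc E)) := count (fun x => (x.1 \in FY ends Y) && (g' x.1 == 1%R)) c.
Definition hh Y c := (dY ends Y c)./2 - (odd (ww Y c) != odd ((dY ends Y c)./2)).

Lemma bY Y : Y \in Cs -> b \notin Y.
Proof. by move=> YC; apply/negP => /(Cs_notX YC); rewrite bX. Qed.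

Lemma ww_d0 Y c : Y \in Cs -> circuit ends c -> hits ends b c -> dY ends Y c = 0 -> ww Y c = 0.
Proof.
move=> YC cc hb d0; have := hit_zero cc hb (bY YC) d0.
have : ww Y c <= count (fun x => x.1 \in FY ends Y) c.
  by apply: sub_count => x /andP[].
lia.
Qed.

Lemma hh_odd Y c : Y \in Cs -> circuit ends c -> hits ends b c -> odd (hh Y c) = odd (ww Y c).
Proof.
move=> YC cc hb; rewrite /hh.
case d0 : (dY ends Y c == 0).
  by rewrite (eqP d0) (ww_d0 YC cc hb (eqP d0)).
have ev := dY_even Y cc.
have : 0 < (dY ends Y c)./2.
  rewrite lt0n; apply/negP => /eqP h0; move: d0.
  by rewrite -[dY ends Y c]odd_double_half (negbTE ev) h0.
case: (dY ends Y c)./2 => [|k] // _.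
rewrite /=; case: (odd (ww Y c)); case ok: (odd k); by rewrite /= ?subSS ?subn0 /= ?ok.
Qed.

Lemma step1 c : circuit ends c -> weight g c != 0%R -> hits ends b c -> 0 < Aw c + \sum_(Y in Cs) hh Y c.
Proof.
move=> cc w0 hb.
have oc : odd (count (fun x => g' x.1 == 1%R) c).
  by move: w0; rewrite -(shifting_weight sh cc) weightE z2nat negbK.
rewrite (count_part ends X (fun e => g' e == 1%R)) in oc.
have : odd (Aw c + \sum_(Y in Cs) hh Y c).
  rewrite oddD (@odd_sum_eq _ _ _ _ (fun Y => ww Y c)) -?oddD //.
  by move=> Y YC; apply: hh_odd.
by case: (Aw c + _).
Qed.


Lemma oddE : odd_comp ends g' X = \sum_(Y in Cs) (odd_set ends g' Y : nat).
Proof.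
rewrite /odd_comp card_sumE [RHS]big_mkcond; apply: eq_bigr => Y _.
by rewrite !inE; case: (component_minus ends X Y).
Qed.

Lemma dXE : (#|delta ends X|)./2 = \sum_(Y in Cs) (#|delta ends Y|)./2.
Proof.
rewrite -sum_delta half_sum // => Y _; exact: delta_even.
Qed.

Lemma O_le : odd_comp ends g' X <= #|delta ends X|./2.
Proof.
rewrite oddE dXE; apply: leq_sum => Y YC.
have pos := delta_pos eul.1 bX YC.
have ev := delta_even Y eul.
have : 0 < (#|delta ends Y|)./2.
  rewrite lt0n; apply/negP => /eqP h0; move: pos.
  by rewrite -[#|delta ends Y|]odd_double_half (negbTE ev) h0.
by case: (odd_set ends g' Y).
Qed.

Variable D : seq (seq (Defs.arc E)).
Hypothesis HD : flooding_decomp ends g b D.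

Lemma uD c : c \in D -> uniq (map fst c).
Proof. by case: HD => H _ /H [/andP[/andP[u _] _] _ _]. Qed.

Lemma HE e : count (fun c => e \in map fst c) D = 1%N.
Proof. by case: HD. Qed.

Lemma step_Y Y : Y \in Cs -> \sum_(c <- D) hh Y c + odd_set ends g' Y <= #|delta ends Y|./2.
Proof.
move=> YC.
have sd : \sum_(c <- D) dY ends Y c = #|delta ends Y|.
  apply: etrans (edge_sum (fun e => e \in delta ends Y) uD HE) _.
  by apply: eq_card => e; rewrite inE.
have sw : \sum_(c <- D) ww Y c = gcount g' (FY ends Y).
  apply: etrans (edge_sum (fun e => (e \in FY ends Y) && (g' e == 1%R)) uD HE) _.
  by apply: eq_card => e; rewrite !inE.
have hd : (#|delta ends Y|)./2 = \sum_(c <- D) (dY ends Y c)./2.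
  rewrite -sd big_seq half_sum; first by rewrite [RHS]big_seq.
  by move=> c cD; case: HD => H _; case: (H c cD) => cc _ _; apply: dY_even.
have le : \sum_(c <- D) hh Y c <= \sum_(c <- D) (dY ends Y c)./2.
  by rewrite big_seq [X in _ <= X]big_seq; apply: leq_sum => c _; apply: leq_subr.
case oY : (odd_set ends g' Y); last by rewrite addn0 hd.
move: oY; rewrite /odd_set -/(FY ends Y) -sw hd => mism.
case: (boolP (has (fun c => odd (ww Y c) != odd ((dY ends Y c)./2)) D)) => [/hasP[c0 c0D mc]|/hasPn H]; last first.
  move: mism; rewrite big_seq [X in _ != odd X]big_seq (@odd_sum_eq _ _ _ (fun c => ww Y c) (fun c => (dY ends Y c)./2)) ?eqxx //.
  by move=> c cD; apply/eqP; rewrite -[_ == _]negbK; apply: H.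
case: HD => H _; case: (H c0 c0D) => cc _ hb.
have d0 : dY ends Y c0 != 0.
  apply/negP => /eqP d0; move: mc; by rewrite (ww_d0 YC cc hb d0) d0.
have pos : 0 < (dY ends Y c0)./2.
  rewrite lt0n; apply/negP => /eqP h0; move: d0.
  by rewrite -[dY ends Y c0]odd_double_half (negbTE (dY_even Y cc)) h0.
have lt : hh Y c0 < (dY ends Y c0)./2.
  by rewrite /hh mc subn1 prednK // ltnSn.
have := @sum_lt _ _ (hh Y) (fun c => (dY ends Y c)./2) _ (fun c _ => leq_subr _ _) c0D lt.
by rewrite -hd addn1.
Qed.

Lemma main_D : size D + odd_comp ends g' X <= gcount g' (Ein ends X) + #|delta ends X|./2.
Proof.
have s1 : size D <= \sum_(c <- D) (Aw c + \sum_(Y in Cs) hh Y c).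
  rewrite -sum1_size big_seq [X in _ <= X]big_seq; apply: leq_sum => c cD.
  by case: HD => H _; case: (H c cD) => cc w0 hb; apply: step1.
have sA : \sum_(c <- D) Aw c = gcount g' (Ein ends X).
  apply: etrans (edge_sum (fun e => (e \in Ein ends X) && (g' e == 1%R)) uD HE) _.
  by apply: eq_card => e; rewrite !inE.
rewrite big_split /= sA exchange_big /= in s1.
have s2 : \sum_(Y in Cs) (\sum_(c <- D) hh Y c + odd_set ends g' Y) <= \sum_(Y in Cs) (#|delta ends Y|)./2.
  by apply: leq_sum => Y YC; apply: step_Y.
rewrite big_split /= -oddE -dXE in s2.
lia.
Qed.

End Main.

Theorem mainTheorem2 (V E : finType) (ends : E -> V * V)
  (g g' : signature E) (b : V) (X : {set V}) :
  eulerian ends -> is_shifting ends g g' -> b \in X ->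
  ((flooding_number ends g b)%:Z <=
     (gcount g' (Ein ends X))%:Z + (#|delta ends X| ./2)%:Z
     - (odd_comp ends g' X)%:Z)%R.
Proof.
move=> eul sh bX.
have hO := O_le g' eul bX.
have hf : flooding_number ends g b <= gcount g' (Ein ends X) + #|delta ends X|./2 - odd_comp ends g' X.
  apply/bigmax_leqP => k; rewrite /pbool; case: excluded_middle_informative => // [[D [HD sz]]] _; rewrite -sz.
  have := main_D eul sh bX HD; lia.
lia.
Qed.
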